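(* Let $N\ge1$ and consider linear subsystems $\Sigma_1,\dots,\Sigma_N$ and their interconnection $\Sigma$ as described in the context, with safe sets $X_i$, input sets $U_i$, $X=\prod_i X_i$, $U=\prod_i U_i$. For each $i\in[1;N]$ let $\delta_i\ge 0$ and let $C_i^{\delta_i}:\mathbb{R}^{n_i}\rightrightarrows U_i+\delta_i\mathbb{B}$ be a $\delta_i$-relaxed safety controller for $\Sigma_i$ and the relaxed safe set $X_i+\delta_i\mathbb{B}$. Let $X^{\delta}=\prod_{i=1}^N(X_i+\delta_i\mathbb{B})$, $U^{\delta}=\prod_{i=1}^N(U_i+\delta_i\mathbb{B})$, and define $C^{\delta}:\mathbb{R}^n\rightrightarrows U^{\delta}$ by $C^\delta(x)=\emptyset$ for $x\in\mathbb{R}^n\setminus X^\delta$ and, for $x=[x_1;\dots;x_N]\in X^{\delta}$, $$C^{\delta}(x)=\{u=[u_1;\dots;u_N]\in U^{\delta}\mid u_i\in C_i^{\delta_i}(x_i)\ \text{for all } i\in[1;N]\}.$$ Then, with $\delta=\|[\delta_1;\dots;\delta_N]\|$ (infinity norm), $C^{\delta}$ is a $\delta$-relaxed safety controller for the interconnected system $\Sigma$, the relaxed safe set $X+\delta\mathbb{B}$ and the relaxed input set $U+\delta\mathbb{B}$.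
   Context: $\mathbb{B}$ denotes the closed unit ball w.r.t. the infinity norm in the Euclidean space of the appropriate dimension; $+$ between sets is the Minkowski sum, and $a+S=\{a\}+S$. Subsystem $\Sigma_i$ is linear: $x_i(t+1)=A_ix_i(t)+B_iu_i(t)+D_iz_i(t)+w_i(t)$ with $A_i\in\mathbb{R}^{n_i\times n_i}$, $B_i\in\mathbb{R}^{n_i\times m_i}$, $D_i\in\mathbb{R}^{n_i\times p_i}$, $w_i(t)\in W_i\subseteq\mathbb{R}^{n_i}$ (compact disturbance set), and internal input $z_i=[z_{i1};\dots;z_{i(i-1)};z_{i(i+1)};\dots;z_{iN}]\in\mathbb{R}^{p_i}$, $z_{ij}\in\mathbb{R}^{p_{ij}}$; its outputs are $h_{ij}(x_i)=H_{ij}x_i$ with matrices $H_{ij}\in\mathbb{R}^{p_{ji}\times n_i}$ for $j\ne i$. The interconnected system $\Sigma$ has state $x=[x_1;\dots;x_N]\in\mathbb{R}^n$, input $u=[u_1;\dots;u_N]\in\mathbb{R}^m$, disturbance $w\in W=\prod_i W_i$, and transition $f(x,u,w)=[A_1x_1+B_1u_1+D_1z_1+w_1;\dots;A_Nx_N+B_Nu_N+D_Nz_N+w_N]$ with $z_{ij}=H_{ji}x_j$. $X_i\subseteq\mathbb{R}^{n_i}$ and $U_i\subseteq\mathbb{R}^{m_i}$ are compact. For $i\ne j$ there are compact sets $Z_{ij}\subseteq\mathbb{R}^{p_{ij}}$ with $H_{ji}(X_j+\delta_j\mathbb{B})\subseteq Z_{ij}$, and $Z_i=\prod_{j\ne i}Z_{ij}$.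 A $\delta_i$-relaxed safety controller for $\Sigma_i$ and $X_i+\delta_i\mathbb{B}$ is a set-valued map $C_i:\mathbb{R}^{n_i}\rightrightarrows U_i+\delta_i\mathbb{B}$ with (1) $C_i(x_i)\subseteq U_i+\delta_i\mathbb{B}$ for all $x_i$; (2) $\mathrm{dom}(C_i)=\{x_i\mid C_i(x_i)\ne\emptyset\}\subseteq X_i+\delta_i\mathbb{B}$; (3) for all $x_i\in\mathrm{dom}(C_i)$ and $u_i\in C_i(x_i)$: $A_ix_i+B_iu_i+D_iZ_i+W_i\subseteq\mathrm{dom}(C_i)$. A $\delta$-relaxed safety controller for $\Sigma$, $X+\delta\mathbb{B}$ and $U+\delta\mathbb{B}$ is a set-valued map $C:\mathbb{R}^n\rightrightarrows U+\delta\mathbb{B}$ with (1) $C(x)\subseteq U+\delta\mathbb{B}$ for all $x$; (2) $\mathrm{dom}(C)\subseteq X+\delta\mathbb{B}$; (3) for all $x\in\mathrm{dom}(C)$, $u\in C(x)$, $w\in W$: $f(x,u,w)\in\mathrm{dom}(C)$. *)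

(* Defs.v *)
(* Vectors of R^k are column vectors
   'cV[R]_k; the normed-module structure of matrices in MathComp-Analysis
   (matrix_normedtype.v) uses mx_norm = max of |entries|, i.e. the infinity
   norm, so `|v| below is the infinity norm of the paper. *)
From HB Require Import structures.
From mathcomp Require Import all_boot all_order all_algebra.
From mathcomp Require Import all_classical all_reals all_analysis.

Set Implicit Arguments.
Unset Strict Implicit.
Unset Printing Implicit Defensive.

Import Order.TTheory GRing.Theory Num.Theory.
Import numFieldNormedType.Exports.
Local Open Scope classical_set_scope.
Local Open Scope ring_scope.

Section Defs.
Variable R : realType.

Definition unitB (k : nat) : set 'cV[R]_k := [set v | `|v| <= 1].

Definition sscale (k : nat) (c : R) (S : set 'cV[R]_k) : set 'cV[R]_k :=
  [set c *: v | v in S].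
Definition msum (k : nat) (S T : set 'cV[R]_k) : set 'cV[R]_k :=
  [set s + t | s in S & t in T].

Definition relax (k : nat) (X : set 'cV[R]_k) (d : R) : set 'cV[R]_k :=
  msum X (sscale d (@unitB k)).

(* A vector x = [x_1; ...; x_N] of R^n, n = n_1 + ... + n_N, is represented
   by its family of blocks x_i in R^{n_i}. *)
Definition gvec (N : nat) (d : 'I_N -> nat) := forall i : 'I_N, 'cV[R]_(d i).

Definition gadd (N : nat) (d : 'I_N -> nat) (x y : gvec d) : gvec d :=
  fun i => x i + y i.
Definition gscale (N : nat) (d : 'I_N -> nat) (c : R) (x : gvec d) : gvec d :=
  fun i => c *: x i.

(* infinity norm of the stacked vector = max over blocks of the block
   infinity norms *)
Definition gnorm (N : nat) (d : 'I_N -> nat) (x : gvec d) : R :=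
  \big[Num.max/0]_(i < N) `|x i|.

Definition gunitB (N : nat) (d : 'I_N -> nat) : set (gvec d) :=
  [set v | gnorm v <= 1].
Definition gsscale (N : nat) (d : 'I_N -> nat) (c : R) (S : set (gvec d)) :
  set (gvec d) := [set gscale c v | v in S].
Definition gmsum (N : nat) (d : 'I_N -> nat) (S T : set (gvec d)) :
  set (gvec d) := [set gadd s t | s in S & t in T].
Definition grelax (N : nat) (d : 'I_N -> nat) (S : set (gvec d)) (e : R) :
  set (gvec d) := gmsum S (gsscale e (@gunitB N d)).

Definition gprod (N : nat) (d : 'I_N -> nat) (S : forall i : 'I_N, set 'cV[R]_(d i)) :
  set (gvec d) := [set x | forall i, S i (x i)].

Definition vnorm_inf (N : nat) (delta : 'I_N -> R) : R :=
  \big[Num.max/0]_(i < N) `|delta i|.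

(* [Post x u] is the set of possible successors of state x under input u.
   C is a set-valued map C : S ⇉ Us with
   (1) C x ⊆ Us, (2) dom C ⊆ Xs, (3) successors stay in dom C. *)
Definition cdom {S I : Type} (C : S -> set I) : set S := [set x | C x !=set0].

Definition relaxed_safety_controller {S I : Type} (Post : S -> I -> set S)
  (Xs : set S) (Us : set I) (C : S -> set I) : Prop :=
  [/\ (forall x, C x `<=` Us),
      cdom C `<=` Xs &
      (forall x u, cdom C x -> C x u -> Post x u `<=` cdom C)].

Unset Implicit Arguments.
Section System.
Variables (N : nat) (n m : 'I_N -> nat) (p : 'I_N -> 'I_N -> nat).
(* p i j = p_{ij}, dimension of the internal input z_{ij} of subsystem i *)
Variables (A : forall i, 'M[R]_(n i)) (B : forall i, 'M[R]_(n i, m i))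
          (D : forall i j, 'M[R]_(n i, p i j))
          (H : forall i j, 'M[R]_(p j i, n i)).
(* D i j is the block column of D_i acting on z_{ij}, i.e.
   D_i z_i = sum_{j <> i} D i j z_{ij};  H i j = H_{ij} : R^{n_i} -> R^{p_{ji}}. *)

Definition DZ (Z : forall i j, set 'cV[R]_(p i j)) (i : 'I_N) : set 'cV[R]_(n i) :=
  [set v | exists z : forall j, 'cV[R]_(p i j),
     (forall j, j != i -> Z i j (z j)) /\ v = \sum_(j < N | j != i) D i j *m z j].

Definition local_post (Z : forall i j, set 'cV[R]_(p i j))
  (W : forall i, set 'cV[R]_(n i)) (i : 'I_N)
  (xi : 'cV[R]_(n i)) (ui : 'cV[R]_(m i)) : set 'cV[R]_(n i) :=
  [set A i *m xi + B i *m ui + dz + w | dz in DZ Z i & w in W i].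

(* transition map f of the interconnected system, z_{ij} = H_{ji} x_j *)
Definition f_int (x : gvec n) (u : gvec m) (w : gvec n) : gvec n :=
  fun i => A i *m x i + B i *m u i
           + \sum_(j < N | j != i) D i j *m (H j i *m x j) + w i.

Definition global_post (W : forall i, set 'cV[R]_(n i)) (x : gvec n) (u : gvec m) :
  set (gvec n) := [set f_int x u w | w in gprod W].

End System.
End Defs.

Arguments DZ {R N n p} D Z i.
Arguments local_post {R N n m p} A B D Z W i xi ui.
Arguments f_int {R N n m p} A B D H x u w.
Arguments global_post {R N n m p} A B D H W x u.

(* Main.v *)
Require Import Defs.
From HB Require Import structures.
From mathcomp Require Import all_boot all_order all_algebra.
From mathcomp Require Import all_classical all_reals all_analysis.
Import Order.TTheory GRing.Theory Num.Theory.
Import numFieldNormedType.Exports.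
Local Open Scope classical_set_scope.
Local Open Scope ring_scope.

Lemma prod_relax_sub (R : realType) (N : nat) (n : 'I_N -> nat)
  (S : forall i, set 'cV[R]_(n i)) (delta : 'I_N -> R) :
  (forall i, 0 <= delta i) ->
  gprod (fun i => relax (S i) (delta i)) `<=` grelax (gprod S) (vnorm_inf delta).
Proof.
move=> d0 x Hx.
have dle : forall i, delta i <= vnorm_inf delta.
  move=> i; apply: le_trans (le_bigmax _ (fun j => `|delta j|) i).
  by rewrite ger0_norm.
have Hx' i : exists abc : 'cV[R]_(n i) * 'cV[R]_(n i),
    [/\ S i abc.1, `|abc.2| <= 1 & abc.1 + delta i *: abc.2 = x i].
  case: (Hx i) => s Hs [t [v Hv <-] e]; by exists (s, v); split.
pose a : gvec R n := fun i => (projT1 (cid (Hx' i))).1.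
pose c : gvec R n := fun i => (projT1 (cid (Hx' i))).2.
have Hc i : [/\ S i (a i), `|c i| <= 1 & a i + delta i *: c i = x i].
  by rewrite /a /c; case: cid => -[s v] /=.
exists a; first by move=> i; have [] := Hc i.
exists (gscale (vnorm_inf delta) (fun i => (delta i / vnorm_inf delta) *: c i)).
  exists (fun i => (delta i / vnorm_inf delta) *: c i) => //.
  rewrite /gunitB /gnorm /=; apply: bigmax_le => // i _.
  rewrite normrZ; have [_ hc _] := Hc i.
  rewrite -[1]mul1r; apply: ler_pM => //.
  rewrite normrM ger0_norm // normfV.
  have [->|nz] := eqVneq (vnorm_inf delta) 0; first by rewrite normr0 invr0 mulr0.
  rewrite ger0_norm ?(le_trans (d0 i) (dle i)) //.
  by rewrite ler_pdivrMr ?mul1r ?lt0r ?nz ?(le_trans (d0 i) (dle i)).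
apply: functional_extensionality_dep => i; rewrite /gadd /gscale.
have [_ _ <-] := Hc i; rewrite scalerA; congr (_ + _ *: _).
have [e0|nz] := eqVneq (vnorm_inf delta) 0.
  by rewrite e0 mul0r; apply/eqP; rewrite eq_le d0 /= -e0 dle.
by rewrite mulrCA divff // mulr1.
Qed.

Theorem theorem3 (R : realType) (N : nat) (hN : (1 <= N)%N)
  (n m : 'I_N -> nat) (p : 'I_N -> 'I_N -> nat)
  (A : forall i, 'M[R]_(n i)) (B : forall i, 'M[R]_(n i, m i))
  (D : forall i j, 'M[R]_(n i, p i j)) (H : forall i j, 'M[R]_(p j i, n i))
  (X : forall i, set 'cV[R]_(n i)) (U : forall i, set 'cV[R]_(m i))
  (W : forall i, set 'cV[R]_(n i)) (Z : forall i j, set 'cV[R]_(p i j))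
  (delta : 'I_N -> R)
  (C : forall i, 'cV[R]_(n i) -> set 'cV[R]_(m i)) :
  (forall i, compact (X i)) ->
  (forall i, compact (U i)) ->
  (forall i, compact (W i)) ->
  (forall i j, j != i -> compact (Z i j)) ->
  (forall i j, j != i ->
     [set H j i *m v | v in relax (X j) (delta j)] `<=` Z i j) ->
  (forall i, 0 <= delta i) ->
  (forall i, relaxed_safety_controller (local_post A B D Z W i)
               (relax (X i) (delta i)) (relax (U i) (delta i)) (C i)) ->
  let Xd := gprod (fun i => relax (X i) (delta i)) in
  let Ud := gprod (fun i => relax (U i) (delta i)) in
  let Cd := fun (x : gvec R n) =>
              [set u : gvec R m | Xd x /\ Ud u /\ forall i, C i (x i) (u i)] in
  let d := vnorm_inf delta in
  relaxed_safety_controller (global_post A B D H W)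
    (grelax (gprod X) d) (grelax (gprod U) d) Cd.
Proof.
move=> _ _ _ _ HZ d0 HC Xd Ud Cd d; split.
- move=> x u [_ [Hu _]]; exact: prod_relax_sub.
- by move=> x [u [Hx _]]; exact: prod_relax_sub.
- move=> x u _ [Hx [Hu HCu]] y [w Hw <-].
  have Hy i : cdom (C i) (f_int A B D H x u w i).
    have [_ _ H3] := HC i.
    have Hdom : cdom (C i) (x i) by exists (u i).
    apply: (H3 _ _ Hdom (HCu i)).
    exists (\sum_(j < N | j != i) D i j *m (H j i *m x j)).
      exists (fun j => H j i *m x j); split => // j ji.
      by apply: (HZ i j ji); exists (x j) => //; exact: Hx.
    by exists (w i) => //; exact: Hw.
  pose u' : gvec R m := fun i => projT1 (cid (Hy i)).
  have Hu' i : C i (f_int A B D H x u w i) (u' i) by rewrite /u'; case: cid.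
  exists u'; rewrite /Cd /Xd /Ud /=; split; [|split].
  + move=> i; have [_ H2 _] := HC i; apply: H2; exists (u' i); exact: Hu'.
  + move=> i; have [H1 _ _] := HC i; exact: (H1 _ _ (Hu' i)).
  + exact: Hu'.
Qed.
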